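(* Let $\mathrm{E}:\mathbb{R}^{n_1\times\dots\times n_d}\to\mathbb{R}$ be continuously differentiable with gradient $\nabla\mathrm{E}$ (with respect to the Euclidean inner product), and consider the gradient system $\dot A=-\nabla\mathrm{E}(A)$. Run the rank-augmenting TTN integrator (described in the context, in real arithmetic) on the maximal tree $\bar\tau=(\tau_1,\dots,\tau_m)$ with an orthonormal starting TTN $Y_{\bar\tau}^0$ of full tree rank and $F(t,Y)=-\nabla\mathrm{E}(Y)$, over a step $t_0<t_1$ with step size $h=t_1-t_0>0$. Let $\widehat{\mathbf{U}}_{\tau_i}$ be the augmented basis matrices and $\widehat C_{\bar\tau}(t)$ the solution of the connection-tensor differential equation in the top-level call, and $\widehat Y_{\bar\tau}(t)=\widehat C_{\bar\tau}(t)\times_{i=1}^m\widehat{\mathbf{U}}_{\tau_i}$. Then the rank-augmented result satisfies $$\mathrm{E}(\widehat Y_{\bar\tau}^1)\le \mathrm{E}(Y_{\bar\tau}^0)-\alpha^2h,\qquad \alpha=\min_{0\le\mu\le1}\Big\|\nabla\mathrm{E}\big(\widehat Y_{\bar\tau}(t_0+\mu h)\big)\times_{i=1}^m\widehat{\mathbf{U}}_{\tau_i}^{\top}\Big\|.$$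
   Context: Tensor notation: for a tensor with modes indexed $0,1,\dots,m$, $\mathrm{mat}_i$ is the mode-$i$ matricization (rows indexed by the $i$th index) and $\mathrm{ten}_i$ its inverse; $A\times_i\mathbf{B}$ is the mode-$i$ product, $\mathrm{mat}_i(A\times_i\mathbf{B})=\mathbf{B}\,\mathrm{mat}_i(A)$; $\times_{i=1}^m$ denotes successive products in modes $1,\dots,m$; ${}^*$ is conjugate transpose (the transpose here, since everything is real); $\|\cdot\|$ and $\langle X,Y\rangle$ are the Euclidean norm and inner product of the vectors of entries. Trees: given a finite leaf set $\mathcal{L}=\{1,\dots,d\}$, each leaf $l$ is a tree with leaf set $\{l\}$; if $\tau_1,\dots,\tau_m$ ($m\ge2$) are trees with pairwise disjoint leaf sets, the ordered tuple $\tau=(\tau_1,\dots,\tau_m)$ is a tree whose leaf set is their union; the $\tau_i$ are its direct subtrees, and subtrees are defined recursively ($\sigma\le\tau$, $\sigma<\tau$ if also $\sigma\ne\tau$). Fix a tree $\bar\tau$ with leaf set $\mathcal{L}$. Tree tensor networks (TTN): given dimensions $n_l$ and ranks $r_\sigma$ ($\sigma\le\bar\tau$, $r_{\bar\tau}=1$), basis matrices $\mathbf{U}_l\in\mathbb{R}^{n_l\times r_l}$ at leaves and connection tensors $C_\tau\in\mathbb{R}^{r_\tau\times r_{\tau_1}\times\dots\times r_{\tau_m}}$ of full multilinear rank at non-leaf subtrees $\tau=(\tau_1,\dots,\tau_m)$, set $X_l=\mathbf{U}_l^\top$, $X_\tau=C_\tau\times_0\mathbf{I}_{r_\tau}\times_{i=1}^m\mathbf{U}_{\tau_i}\in\mathcal{V}_\tau:=\mathbb{R}^{r_\tau\times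 n_{\tau_1}\times\dots\times n_{\tau_m}}$ with $n_\tau=\prod_i n_{\tau_i}$, and $\mathbf{U}_\tau=\mathrm{mat}_0(X_\tau)^\top$; for a leaf, $\mathcal{V}_l:=\mathbb{R}^{r_l\times n_l}$. The TTN is orthonormal if every $\mathbf{U}_\sigma$, $\sigma<\bar\tau$, has orthonormal columns. Full tree rank means all connection tensors have full multilinear rank. $\mathcal{V}_{\bar\tau}$ is identified with $\mathbb{R}^{n_1\times\dots\times n_d}$. Reduced operators and starting values: for a non-leaf $\tau=(\tau_1,\dots,\tau_m)$, a function $F_\tau:[t_0,t_1]\times\mathcal{V}_\tau\to\mathcal{V}_\tau$ and a starting TTN $Y_\tau^0=C_\tau^0\times_0\mathbf{I}_{r_\tau}\times_{i=1}^m\mathbf{U}_{\tau_i}^0$ with $\mathbf{U}_{\tau_i}^0=\mathrm{mat}_0(X_{\tau_i}^0)^\top$, compute QR decompositions $\mathrm{mat}_i(C_\tau^0)^\top=\mathbf{Q}_{\tau_i}^0\mathbf{S}_{\tau_i}^{0,\top}$, let $\mathbf{V}_{\tau_i}^0=\mathrm{mat}_i\big(\mathrm{ten}_i(\mathbf{Q}_{\tau_i}^{0,\top})\times_0\mathbf{I}_{r_\tau}\times_{j\ne i}\mathbf{U}_{\tau_j}^0\big)^\top$, prolongation $\pi_{\tau,i}(Y)=\mathrm{ten}_i\big((\mathbf{V}_{\tau_i}^0\mathrm{mat}_0(Y))^\top\big)$, restriction $\pi_{\tau,i}^\dagger(Z)=\mathrm{ten}_0\big((\mathrm{mat}_i(Z)\mathbf{V}_{\tau_i}^0)^\top\big)$,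 and set $F_{\tau_i}(t,Y)=\pi_{\tau,i}^\dagger(F_\tau(t,\pi_{\tau,i}(Y)))$ and $Y_{\tau_i}^0=X_{\tau_i}^0\times_0\mathbf{S}_{\tau_i}^{0,\top}$. Rank-augmenting TTN integrator on $(\tau,Y_\tau^0,F_\tau,t_0,t_1)$, $\tau$ non-leaf: (1) for each $i$: if $\tau_i=l$ is a leaf, solve $\dot Y_l=F_l(t,Y_l)$, $Y_l(t_0)=Y_l^0$, let $\widehat{\mathbf{U}}_l$ have orthonormal columns spanning the range of $(Y_l(t_1)^\top,\mathbf{U}_l^0)$, and $\widehat{\mathbf{M}}_l=\widehat{\mathbf{U}}_l^*\mathbf{U}_l^0$; otherwise call the integrator recursively on $(\tau_i,Y_{\tau_i}^0,F_{\tau_i},t_0,t_1)$, obtaining $\widehat Y_{\tau_i}^1$ (with root connection tensor $\widehat C_{\tau_i}^1$) and $\widehat C_{\tau_i}^0$, let $\widehat{\mathbf{Q}}_{\tau_i}$ have orthonormal columns spanning the range of $(\mathrm{mat}_0(\widehat C_{\tau_i}^1)^\top,\mathrm{mat}_0(\widehat C_{\tau_i}^0)^\top)$, let $\widehat X_{\tau_i}$ be $\widehat Y_{\tau_i}^1$ with root connection tensor replaced by $\mathrm{ten}_0(\widehat{\mathbf{Q}}_{\tau_i}^\top)$, and set $\widehat{\mathbf{U}}_{\tau_i}=\mathrm{mat}_0(\widehat X_{\tau_i})^\top$, $\widehat{\mathbf{M}}_{\tau_i}=\widehat{\mathbf{U}}_{\tau_i}^*\mathbf{U}_{\tau_i}^0$.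 (2) Set $\widehat C_\tau^0=C_\tau^0\times_{i=1}^m\widehat{\mathbf{M}}_{\tau_i}$, solve $\dot{\widehat C}_\tau(t)=F_\tau\big(t,\widehat C_\tau(t)\times_0\mathbf{I}_{r_\tau}\times_{i=1}^m\widehat{\mathbf{U}}_{\tau_i}\big)\times_{i=1}^m\widehat{\mathbf{U}}_{\tau_i}^*$, $\widehat C_\tau(t_0)=\widehat C_\tau^0$, set $\widehat C_\tau^1=\widehat C_\tau(t_1)$, and return $\widehat Y_\tau^1=\widehat C_\tau^1\times_0\mathbf{I}_{r_\tau}\times_{i=1}^m\widehat{\mathbf{U}}_{\tau_i}$ and $\widehat C_\tau^0$. At the top level, $F_{\bar\tau}=F$ and $Y_{\bar\tau}^0$ is the given starting TTN. All differential equations are assumed to be solved exactly. *)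

(* Defs.v *)
From HB Require Import structures.
From mathcomp Require Import all_boot all_order all_algebra.
From mathcomp Require Import all_classical all_reals all_analysis.
From Stdlib Require Lists.List.
Set Implicit Arguments.
Unset Strict Implicit.
Unset Printing Implicit Defensive.
Import Order.TTheory GRing.Theory Num.Theory.
Import numFieldNormedType.Exports.
Local Open Scope ring_scope.
Local Open Scope classical_set_scope.

(* Conventions:
   - a tensor with mode dimensions ds = [d_0; ...; d_m] is a total function
     on multi-indices (seq nat); only in-range indices (J \in mindices ds)
     are meaningful; norms, inner products, equations only look at them.
   - a matrix with a rows and b columns is a total function nat -> nat -> R,
     only the entries (i, j) with i < a, j < b being meaningful.
   - matricization columns / flattened mode indices use the mixed-radix
     (row-major) bijection [unflat]/[flat]. *)

Section TTNDefs.
Variable R : realType.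

Definition tens := seq nat -> R.
Definition mat := nat -> nat -> R.

Definition prodn (ds : seq nat) : nat := foldr muln 1%N ds.

Fixpoint unflat (ds : seq nat) (k : nat) : seq nat :=
  match ds with
  | [::] => [::]
  | d :: ds' => (k %/ prodn ds')%N :: unflat ds' (k %% prodn ds')%N
  end.

Fixpoint flat (ds : seq nat) (J : seq nat) : nat :=
  match ds, J with
  | d :: ds', j :: J' => (j * prodn ds' + flat ds' J')%N
  | _, _ => 0%N
  end.

Definition rem_at (i : nat) (s : seq nat) : seq nat := take i s ++ drop i.+1 s.
Definition ins_at (i : nat) (x : nat) (s : seq nat) : seq nat :=
  take i s ++ x :: drop i s.

Fixpoint mindices (ds : seq nat) : seq (seq nat) :=
  match ds with
  | [::] => [:: [::]]
  | d :: ds' => [seq j :: J | j <- iota 0 d, J <- mindices ds']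
  end.

Definition addT (X Y : tens) : tens := fun J => X J + Y J.
Definition subT (X Y : tens) : tens := fun J => X J - Y J.
Definition innerT (ds : seq nat) (X Y : tens) : R :=
  \sum_(J <- mindices ds) X J * Y J.
Definition normT (ds : seq nat) (X : tens) : R := Num.sqrt (innerT ds X X).

(* mode-i matricization (rows: i-th index) of a tensor with dims ds *)
Definition matz (ds : seq nat) (i : nat) (A : tens) : mat :=
  fun a b => A (ins_at i a (unflat (rem_at i ds) b)).
(* its inverse: ten_i, producing a tensor with dims ds *)
Definition tenz (ds : seq nat) (i : nat) (M : mat) : tens :=
  fun J => M (nth 0%N J i) (flat (rem_at i ds) (rem_at i J)).

(* mode-i product A x_i B, where the old i-th dimension of A is dold *)
Definition mprod (i dold : nat) (B : mat) (A : tens) : tens :=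
  fun J => \sum_(k < dold) B (nth 0%N J i) k * A (set_nth 0%N J i k).

Fixpoint mprods_from (i : nat) (Bs : seq (mat * nat)) (A : tens) : tens :=
  match Bs with
  | [::] => A
  | (B, dold) :: Bs' => mprods_from i.+1 Bs' (mprod i dold B A)
  end.

Definition mulm (k : nat) (A B : mat) : mat :=
  fun a b => \sum_(l < k) A a l * B l b.
Definition trm (A : mat) : mat := fun a b => A b a.
Definition idm : mat := fun a b => (a == b)%:R.

Definition mx (a b : nat) (M : mat) : 'M[R]_(a, b) := \matrix_(i < a, j < b) M i j.

Definition orthocols (m c : nat) (U : mat) : Prop :=
  (mx m c U)^T *m mx m c U = 1%:M.

(* the range of U (m x c) equals the range of the block matrix (A, B),
   A : m x k1, B : m x k2 *)
Definition spans_cat (m c : nat) (U : mat) (k1 : nat) (A : mat) (k2 : nat) (B : mat)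
  : bool :=
  ((mx m c U)^T == col_mx (mx m k1 A)^T (mx m k2 B)^T)%MS.

Definition fullmlrank (ds : seq nat) (C : tens) : Prop :=
  forall k, (k < size ds)%N ->
    \rank (mx (nth 0%N ds k) (prodn (rem_at k ds)) (matz ds k C)) = nth 0%N ds k.

Definition ode_sol (ds : seq nat) (F : R -> tens -> tens) (t0 t1 : R)
  (Y0 : tens) (Y : R -> tens) : Prop :=
  forall J, J \in mindices ds ->
    Y t0 J = Y0 J /\
    {within `[t0, t1], continuous (fun t => Y t J)} /\
    (forall t, t0 < t < t1 -> is_derive t 1 (fun s => Y s J) (F t (Y t) J)).

Definition C1_with_gradient (ds : seq nat) (E : tens -> R) (gradE : tens -> tens)
  : Prop :=
  (forall X Y, (forall J, J \in mindices ds -> X J = Y J) -> E X = E Y) /\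
  (forall X (eps : R), 0 < eps -> exists2 delta : R, 0 < delta &
     forall H, normT ds H < delta ->
       `|E (addT X H) - E X - innerT ds (gradE X) H| <= eps * normT ds H) /\
  (forall X (eps : R), 0 < eps -> exists2 delta : R, 0 < delta &
     forall H, normT ds H < delta ->
       normT ds (subT (gradE (addT X H)) (gradE X)) < eps).

(* TLeaf l r U : leaf l with basis matrix U (n_l x r);
   TNode r C cs : subtree (cs_1, ..., cs_m) with rank r and connection
   tensor C of dims [r; rank cs_1; ...; rank cs_m]. *)
Inductive ttn :=
| TLeaf of nat & nat & mat
| TNode of nat & tens & seq ttn.

Definition rank (t : ttn) : nat :=
  match t with TLeaf _ r _ => r | TNode r _ _ => r end.

Definition dflt : ttn := TLeaf 0 0 (fun _ _ => 0).

Fixpoint leaves (t : ttn) : seq nat :=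
  match t with
  | TLeaf l _ _ => [:: l]
  | TNode _ _ cs => flatten [seq leaves c | c <- cs]
  end.

Fixpoint wf_tree (t : ttn) : bool :=
  match t with
  | TLeaf _ _ _ => true
  | TNode _ _ cs => (1 < size cs)%N && all wf_tree cs
  end.

Fixpoint subtrees (t : ttn) : seq ttn :=
  t :: match t with
       | TLeaf _ _ _ => [::]
       | TNode _ _ cs => flatten [seq subtrees c | c <- cs]
       end.

Variable n : nat -> nat.

Fixpoint nT (t : ttn) : nat :=
  match t with
  | TLeaf l _ _ => n l
  | TNode _ _ cs =>
      (fix pr (cs : seq ttn) : nat :=
         match cs with [::] => 1%N | c :: cs' => (nT c * pr cs')%N end) cs
  end.

(* U_tau = mat_0(X_tau)^T *)
Fixpoint basis (t : ttn) : mat :=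
  match t with
  | TLeaf _ _ U => U
  | TNode _ C cs => fun a b =>
      mprods_from 1 [seq (basis c, rank c) | c <- cs] C
                  (b :: unflat [seq nT c | c <- cs] a)
  end.

Definition xt (t : ttn) : tens :=
  match t with
  | TLeaf _ _ U => fun J => U (nth 0%N J 1) (nth 0%N J 0)
  | TNode _ C cs => mprods_from 1 [seq (basis c, rank c) | c <- cs] C
  end.

Definition vdims (t : ttn) : seq nat :=
  match t with
  | TLeaf l r _ => [:: r; n l]
  | TNode r _ cs => r :: [seq nT c | c <- cs]
  end.

Definition node_fullrank (t : ttn) : Prop :=
  match t with
  | TLeaf _ _ _ => True
  | TNode r C cs => fullmlrank (r :: [seq rank c | c <- cs]) C
  end.

Definition ortho_ttn (t : ttn) : Prop :=
  forall s, List.In s (behead (subtrees t)) -> orthocols (nT s) (rank s) (basis s).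

Definition fullrank_ttn (t : ttn) : Prop :=
  forall s, List.In s (subtrees t) -> node_fullrank s.

(* V^0_{tau_i} for tau = (r, C0, cs), child i (mode i+1), from Q = Q^0_{tau_i} *)
Definition Vmat (r : nat) (cs : seq ttn) (i : nat) (Q : mat) : mat :=
  let D := r :: [seq rank c | c <- cs] in
  let Bs := [seq ((if j == i then idm else basis (nth dflt cs j)),
                  rank (nth dflt cs j)) | j <- iota 0 (size cs)] in
  let D' := r :: [seq (if j == i then rank (nth dflt cs j) else nT (nth dflt cs j))
                 | j <- iota 0 (size cs)] in
  trm (matz D' i.+1 (mprods_from 1 Bs (tenz D i.+1 (trm Q)))).

Definition pdim (r : nat) (cs : seq ttn) (i : nat) : nat :=
  prodn (rem_at i.+1 (r :: [seq nT c | c <- cs])).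

Definition prol (r : nat) (cs : seq ttn) (i : nat) (Q : mat) (Y : tens) : tens :=
  let c := nth dflt cs i in
  tenz (r :: [seq nT c | c <- cs]) i.+1
       (trm (mulm (rank c) (Vmat r cs i Q) (matz (vdims c) 0 Y))).

Definition restr (r : nat) (cs : seq ttn) (i : nat) (Q : mat) (Z : tens) : tens :=
  let c := nth dflt cs i in
  tenz (vdims c) 0
       (trm (mulm (pdim r cs i) (matz (r :: [seq nT c | c <- cs]) i.+1 Z)
                  (Vmat r cs i Q))).

Definition Fsub (r : nat) (cs : seq ttn) (i : nat) (Q : mat)
  (F : R -> tens -> tens) : R -> tens -> tens :=
  fun t Y => restr r cs i Q (F t (prol r cs i Q Y)).

Definition Mhat (c xh : ttn) : mat := mulm (nT c) (trm (basis xh)) (basis c).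

Definition chat0 (C0 : tens) (cs Xhs : seq ttn) : tens :=
  mprods_from 1 [seq (Mhat (nth dflt cs j) (nth dflt Xhs j), rank (nth dflt cs j))
                | j <- iota 0 (size cs)] C0.

Definition expand (Xhs : seq ttn) (C : tens) : tens :=
  mprods_from 1 [seq (basis x, rank x) | x <- Xhs] C.
Definition project (Xhs : seq ttn) (Z : tens) : tens :=
  mprods_from 1 [seq (trm (basis x), nT x) | x <- Xhs] Z.

(* Step at a non-leaf tau = (r, C0, cs) with reduced function F, given the
   choices: QR factors Q i, S i, processed children Xhs (the X-hat_{tau_i},
   whose bases are the Uhat_{tau_i}), and the solution Chat of the
   connection-tensor ODE.  CR is the child-processing relation. *)
Definition NodeStep
  (CR : ttn -> mat -> (R -> tens -> tens) -> R -> R -> ttn -> Prop)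
  (r : nat) (C0 : tens) (cs : seq ttn) (F : R -> tens -> tens) (t0 t1 : R)
  (Q S : nat -> mat) (Xhs : seq ttn) (Chat : R -> tens) : Prop :=
  size Xhs = size cs /\
  (forall i, (i < size cs)%N ->
     orthocols (prodn (rem_at i.+1 (r :: [seq rank c | c <- cs])))
               (rank (nth dflt cs i)) (Q i) /\
     (forall a b, (a < b < rank (nth dflt cs i))%N -> S i a b = 0) /\
     mx (prodn (rem_at i.+1 (r :: [seq rank c | c <- cs]))) (rank (nth dflt cs i))
        (trm (matz (r :: [seq rank c | c <- cs]) i.+1 C0)) =
     mx (prodn (rem_at i.+1 (r :: [seq rank c | c <- cs]))) (rank (nth dflt cs i)) (Q i)
       *m (mx (rank (nth dflt cs i)) (rank (nth dflt cs i)) (S i))^T /\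
     CR (nth dflt cs i) (S i) (Fsub r cs i (Q i) F) t0 t1 (nth dflt Xhs i)) /\
  ode_sol (r :: [seq rank x | x <- Xhs])
          (fun t C => project Xhs (F t (expand Xhs C))) t0 t1
          (chat0 C0 cs Xhs) Chat.

(* Run Y0 F t0 t1 Yhat1 Chat0 : the integrator on (tau, Y0, F, t0, t1) may
   return (Yhat1, Chat0).
   ChildRun X0 S F t0 t1 Xhat : processing of a direct subtree with starting
   X^0_{tau_i} = X0, S = S^0_{tau_i}, reduced function F = F_{tau_i}, yields
   X-hat_{tau_i} = Xhat (for a leaf, X-hat is the leaf with basis Uhat_l). *)
Inductive Run : ttn -> (R -> tens -> tens) -> R -> R -> ttn -> tens -> Prop :=
| RunNode r C0 cs F t0 t1 Q S Xhs Chat :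
    NodeStep ChildRun r C0 cs F t0 t1 Q S Xhs Chat ->
    Run (TNode r C0 cs) F t0 t1 (TNode r (Chat t1) Xhs) (chat0 C0 cs Xhs)
with ChildRun : ttn -> mat -> (R -> tens -> tens) -> R -> R -> ttn -> Prop :=
| ChildLeaf l r U0 S F t0 t1 (Y : R -> tens) c Uh :
    ode_sol [:: r; n l] F t0 t1 (mprod 0 r (trm S) (xt (TLeaf l r U0))) Y ->
    orthocols (n l) c Uh ->
    spans_cat (n l) c Uh r (fun a b => Y t1 [:: b; a]) r U0 ->
    ChildRun (TLeaf l r U0) S F t0 t1 (TLeaf l c Uh)
| ChildNode r C cs S F t0 t1 C1 cs' Ch0 c Qh :
    Run (TNode r (mprod 0 r (trm S) C) cs) F t0 t1 (TNode r C1 cs') Ch0 ->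
    orthocols (prodn [seq rank x | x <- cs']) c Qh ->
    spans_cat (prodn [seq rank x | x <- cs']) c Qh
              r (trm (matz (r :: [seq rank x | x <- cs']) 0 C1))
              r (trm (matz (r :: [seq rank x | x <- cs']) 0 Ch0)) ->
    ChildRun (TNode r C cs) S F t0 t1
             (TNode c (tenz (c :: [seq rank x | x <- cs']) 0 (trm Qh)) cs').

End TTNDefs.

(* Main.v *)
Require Import Defs.
From HB Require Import structures.
From mathcomp Require Import all_boot all_order all_algebra.
From mathcomp Require Import all_classical all_reals all_analysis.
From mathcomp Require Import ring lra.
Import Order.TTheory GRing.Theory Num.Theory.
Import numFieldNormedType.Exports.
Local Open Scope ring_scope.
Set Implicit Arguments.
Unset Strict Implicit.
Unset Printing Implicit Defensive.

Section P1.
Variable R : realType.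

Lemma size_unflat ds k : size (unflat ds k) = size ds.
Proof. by elim: ds k => //= d ds IH k; rewrite IH. Qed.

Lemma mem_mindices_cons d ds j J :
  (j :: J \in mindices (d :: ds)) = (j < d)%N && (J \in mindices ds).
Proof.
apply/allpairsP/andP => [[[x y] /= [hx hy [-> ->]]]|[hj hJ]].
  by rewrite mem_iota in hx; split.
by exists (j, J); rewrite /= mem_iota.
Qed.

Lemma mindices_cons_inv d ds J : J \in mindices (d :: ds) ->
  exists j J', J = j :: J'.
Proof. by case/allpairsP => -[x y] [_ _ ->]; exists x, y. Qed.

Lemma mindices_nil J : (J \in mindices [::]) = (J == [::]).
Proof. by rewrite inE. Qed.

Lemma allpairs_nil_r (s : seq nat) (f : nat -> seq nat -> seq nat) :
  [seq f x y | x <- s, y <- [::]] = [::].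
Proof. by elim: s. Qed.

Lemma mindices_unflat ds : mindices ds = map (unflat ds) (iota 0 (prodn ds)).
Proof.
elim: ds => [|d ds IH] //=; rewrite IH.
set p := prodn ds.
have [p0|pp] := posnP p.
  by rewrite p0 muln0 /= allpairs_nil_r.
elim: d => [|d IHd] //.
rewrite -addn1 iotaD allpairs_cat IHd mulnDl mul1n iotaD map_cat add0n.
congr (_ ++ _); rewrite /= cats0.
have -> : iota (d * p) p = map (addn (d * p)) (iota 0 p) by rewrite -iotaDl addn0.
rewrite -!map_comp.
apply/eq_in_map => k; rewrite mem_iota add0n => /andP[_ hk] /=.
by rewrite divnMDl // divn_small // addn0 modnMDl modn_small.
Qed.

Lemma flat_unflat {ds k} : (k < prodn ds)%N -> flat ds (unflat ds k) = k.
Proof.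
elim: ds k => [|d ds IH] k /=; first by case: k.
move=> hk; have pp : (0 < prodn ds)%N.
  by move: hk; case: (prodn ds) => //; rewrite muln0.
by rewrite IH ?ltn_pmod // -divn_eq.
Qed.

Lemma uniq_mindices ds : uniq (mindices ds).
Proof.
rewrite mindices_unflat map_inj_in_uniq ?iota_uniq // => x y.
rewrite !mem_iota !add0n => /andP[_ hx] /andP[_ hy] e.
by rewrite -[x](flat_unflat hx) -[y](flat_unflat hy) e.
Qed.

Lemma unflat_mem ds k : (k < prodn ds)%N -> unflat ds k \in mindices ds.
Proof. by move=> hk; rewrite mindices_unflat map_f // mem_iota. Qed.

Lemma size_mindices ds J : J \in mindices ds -> size J = size ds.
Proof.
rewrite mindices_unflat => /mapP [k _ ->]; exact: size_unflat.
Qed.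

Lemma sum_iota (d : nat) (G : nat -> R) :
  \sum_(k < d) G k = \sum_(j <- iota 0 d) G j.
Proof.
have -> : iota 0 d = index_iota 0 d by rewrite /index_iota subn0.
by rewrite big_mkord.
Qed.

Lemma sum_unflat ds (F : seq nat -> R) :
  \sum_(a < prodn ds) F (unflat ds a) = \sum_(A <- mindices ds) F A.
Proof. by rewrite mindices_unflat big_map (sum_iota _ (fun k => F (unflat ds k))). Qed.

Lemma sum_flat ds (G : nat -> R) :
  \sum_(K <- mindices ds) G (flat ds K) = \sum_(k < prodn ds) G k.
Proof.
rewrite mindices_unflat big_map sum_iota; apply: eq_big_seq => k.
by rewrite mem_iota add0n => /andP[_ hk]; rewrite flat_unflat.
Qed.

Definition bprod (Bs : seq (mat R * nat)) (I K : seq nat) : R :=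
  \prod_(j < size Bs) (nth (idm R, 0%N) Bs j).1 (nth 0%N I j) (nth 0%N K j).

Lemma set_nth_cat (s t : seq nat) y k :
  set_nth 0%N (s ++ y :: t) (size s) k = s ++ k :: t.
Proof. by elim: s => //= x s ->. Qed.

Lemma set_nth_cat' (s t : seq nat) y k i : size s = i ->
  set_nth 0%N (s ++ y :: t) i k = s ++ k :: t.
Proof. by move<-; apply: set_nth_cat. Qed.

Lemma mprods_expand Bs : forall i A J, size J = (i + size Bs)%N ->
  mprods_from i Bs A J =
  \sum_(K <- mindices (map snd Bs)) bprod Bs (drop i J) K * A (take i J ++ K).
Proof.
elim: Bs => [|[B d] Bs IH] i A J hJ /=.
  by rewrite big_seq1 /bprod big_ord0 mul1r cats0 take_oversize // hJ addn0.
rewrite IH; last by rewrite hJ addSnnS.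
have hi : (i < size J)%N by rewrite hJ -addSnnS leq_addr.
have hs : size (take i J) = i by rewrite size_take hi.
rewrite big_allpairs_dep /=.
have E1 : forall K', bprod Bs (drop i.+1 J) K' * mprod i d B A (take i.+1 J ++ K') =
  \sum_(j <- iota 0 d) bprod Bs (drop i.+1 J) K' * (B (nth 0%N J i) j * A (take i J ++ j :: K')).
  move=> K'; rewrite (take_nth 0%N hi) cat_rcons /mprod nth_cat hs ltnn subnn /=.
  rewrite (sum_iota d (fun k => B (nth 0%N J i) k * A (set_nth 0%N (take i J ++ nth 0%N J i :: K') i k))).
  rewrite big_distrr /=; apply: eq_bigr => j _.
  by rewrite (@set_nth_cat' _ _ _ _ _ hs).
rewrite (eq_bigr _ (fun K' _ => E1 K')).
rewrite exchange_big /=; apply: eq_bigr => j _; apply: eq_bigr => K' _.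
rewrite /bprod big_ord_recl /= nth_drop addn0 -mulrA [LHS]mulrCA; congr (_ * (_ * _)).
apply: eq_bigr => k _; rewrite !nth_drop /=.
by rewrite /bump /= add1n addnS addSn.
Qed.

Lemma mprods1 Bs A b I : size I = size Bs ->
  mprods_from 1 Bs A (b :: I) =
  \sum_(K <- mindices (map snd Bs)) bprod Bs I K * A (b :: K).
Proof.
move=> hI; rewrite mprods_expand /=; last by rewrite hI.
by rewrite drop0 take0.
Qed.

Definition kprod (m : nat) (f : nat -> mat R) (I K : seq nat) : R :=
  \prod_(j < m) f j (nth 0%N I j) (nth 0%N K j).

Lemma bprod_map (T : Type) (x0 : T) (s : seq T) (g : T -> mat R) (h : T -> nat) I K :
  bprod [seq (g x, h x) | x <- s] I K = kprod (size s) (fun j => g (nth x0 s j)) I K.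
Proof.
rewrite /bprod /kprod size_map; apply: eq_bigr => j _; by rewrite (nth_map x0).
Qed.

Lemma sum_prod_mindices (ds : seq nat) (f : nat -> nat -> R) :
  \sum_(K <- mindices ds) \prod_(j < size ds) f j (nth 0%N K j) =
  \prod_(j < size ds) \sum_(k < nth 0%N ds j) f j k.
Proof.
elim: ds f => [|d ds IH] f /=.
  by rewrite big_seq1 !big_ord0.
rewrite big_allpairs_dep big_ord_recl /= sum_iota big_distrl /=.
apply: eq_bigr => j _.
rewrite -(IH (fun j => f j.+1)) big_distrr /=; apply: eq_bigr => K _.
by rewrite big_ord_recl.
Qed.

End P1.

Section P2.
Variable R : realType.
Variable n : nat -> nat.
Local Notation ttn := (ttn R).
Local Notation dflt := (dflt R).
Local Notation basis := (@Defs.basis R n).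
Local Notation nT := (@Defs.nT R n).

Lemma nT_node r C cs : nT (TNode r C cs) = prodn [seq nT c | c <- cs].
Proof. by elim: cs => //= c cs ->. Qed.

Lemma map_nth_iota (T U : Type) (x0 : T) (f : T -> U) (s : seq T) :
  [seq f (nth x0 s j) | j <- iota 0 (size s)] = map f s.
Proof. by rewrite -[in RHS](mkseq_nth x0 s) /mkseq -map_comp. Qed.

Lemma basis_node r C cs a b :
  basis (TNode r C cs) a b =
  \sum_(K <- mindices [seq rank c | c <- cs])
     kprod (size cs) (fun j => basis (nth dflt cs j)) (unflat [seq nT c | c <- cs] a) K
     * C (b :: K).
Proof.
rewrite /= mprods1; last by rewrite size_unflat !size_map.
rewrite -map_comp; apply: eq_bigr => K _; by rewrite (bprod_map dflt).
Qed.

Lemma expandE Xhs C b I : size I = size Xhs ->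
  Defs.expand n Xhs C (b :: I) =
  \sum_(K <- mindices [seq rank x | x <- Xhs])
     kprod (size Xhs) (fun j => basis (nth dflt Xhs j)) I K * C (b :: K).
Proof.
move=> hI; rewrite /Defs.expand mprods1; last by rewrite size_map.
rewrite -map_comp; apply: eq_bigr => K _; by rewrite (bprod_map dflt).
Qed.

Lemma projectE Xhs Z b I : size I = size Xhs ->
  project n Xhs Z (b :: I) =
  \sum_(A <- mindices [seq nT x | x <- Xhs])
     kprod (size Xhs) (fun j => trm (basis (nth dflt Xhs j))) I A * Z (b :: A).
Proof.
move=> hI; rewrite /project mprods1; last by rewrite size_map.
rewrite -map_comp; apply: eq_bigr => K _; by rewrite (bprod_map dflt).
Qed.

Lemma chat0E C0 cs Xhs b I : size I = size cs ->
  chat0 n C0 cs Xhs (b :: I) =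
  \sum_(L <- mindices [seq rank c | c <- cs])
     kprod (size cs) (fun j => Mhat n (nth dflt cs j) (nth dflt Xhs j)) I L * C0 (b :: L).
Proof.
move=> hI; rewrite /chat0 mprods1; last by rewrite size_map size_iota.
rewrite -map_comp /= (map_nth_iota dflt (fun c => rank c)).
apply: eq_bigr => K _; congr (_ * _); rewrite (bprod_map 0%N) /kprod size_iota.
by apply: eq_bigr => j _; rewrite nth_iota.
Qed.

Lemma mindices_nth ds K j : K \in mindices ds -> (j < size ds)%N ->
  (nth 0%N K j < nth 0%N ds j)%N.
Proof.
elim: ds K j => [|d ds IH] K j // hK.
have [x [K' eK]] := mindices_cons_inv hK; subst K.
rewrite mem_mindices_cons in hK; case/andP: hK => hx hK'.
by case: j => [|j] //= hj; apply: IH.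
Qed.

Lemma unflat_flat ds K : K \in mindices ds ->
  unflat ds (flat ds K) = K /\ (flat ds K < prodn ds)%N.
Proof.
rewrite mindices_unflat => /mapP [k]; rewrite mem_iota add0n => /andP[_ hk] ->.
by rewrite flat_unflat.
Qed.

Lemma kprod_mul ds (f g : nat -> mat R) I L :
  \sum_(K <- mindices ds) kprod (size ds) f I K * kprod (size ds) g K L =
  kprod (size ds) (fun j => mulm (nth 0%N ds j) (f j) (g j)) I L.
Proof.
rewrite /kprod.
under eq_bigr => K _ do rewrite -big_split /=.
by rewrite (sum_prod_mindices ds (fun j k => f j (nth 0%N I j) k * g j k (nth 0%N L j))).
Qed.

Lemma kprod_delta ds K K' : K \in mindices ds -> K' \in mindices ds ->
  kprod (R:=R) (size ds) (fun j a b => (a == b)%:R) K K' = (K == K')%:R.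
Proof.
move=> hK hK'; rewrite /kprod.
have sK := size_mindices hK; have sK' := size_mindices hK'.
case: eqP => [->|ne]; first by apply: big1 => j _; rewrite eqxx.
case: (pickP (fun j : 'I_(size ds) => nth 0%N K j != nth 0%N K' j)) => [j hj|none].
  by rewrite (bigD1 j) //= (negbTE hj) mul0r.
exfalso; apply: ne; apply: (eq_from_nth (x0 := 0%N)); first by rewrite sK sK'.
by move=> i; rewrite sK => hi; have := none (Ordinal hi) => /= /negbFE/eqP.
Qed.

Lemma sum_delta (s : seq (seq nat)) x (G : seq nat -> R) : uniq s -> x \in s ->
  \sum_(y <- s) (x == y)%:R * G y = G x.
Proof.
move=> us xs; rewrite (bigD1_seq x) //= eqxx mul1r big1_seq ?addr0 //.
by move=> y /andP[hy _]; rewrite eq_sym (negbTE hy) mul0r.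
Qed.

Lemma orthocolsE m c (U : mat R) : orthocols m c U -> forall k k', (k < c)%N -> (k' < c)%N ->
  \sum_(a < m) U a k * U a k' = (k == k')%:R.
Proof.
move=> /matrixP H k k' hk hk'; have := H (Ordinal hk) (Ordinal hk').
by rewrite !mxE => <-; apply: eq_bigr => a _; rewrite !mxE.
Qed.

Definition Qten (c : nat) (cs' : seq ttn) (Qh : mat R) : tens R :=
  tenz (c :: [seq rank x | x <- cs']) 0 (trm Qh).

Lemma QtenE c cs' Qh b K : Qten c cs' Qh ((b:nat) :: K) = Qh (flat [seq rank x | x <- cs'] K) b.
Proof. by rewrite /Qten /tenz /rem_at /= !drop0. Qed.

Lemma node_ortho cs' c (Qh : mat R) :
  (forall j, (j < size cs')%N ->
     orthocols (nT (nth dflt cs' j)) (rank (nth dflt cs' j)) (basis (nth dflt cs' j))) ->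
  orthocols (prodn [seq rank x | x <- cs']) c Qh ->
  orthocols (nT (TNode c (Qten c cs' Qh) cs')) c (basis (TNode c (Qten c cs' Qh) cs')).
Proof.
move=> horth hQ; apply/matrixP => b b'; rewrite !mxE nT_node.
under eq_bigr => a _ do rewrite !mxE !basis_node.
set ranks := [seq rank x | x <- cs'].
rewrite (sum_unflat _ (fun A => (\sum_(K <- mindices ranks)
    kprod (size cs') (fun j => basis (nth dflt cs' j)) A K * Qten c cs' Qh ((b:nat) :: K)) *
   (\sum_(K <- mindices ranks)
    kprod (size cs') (fun j => basis (nth dflt cs' j)) A K * Qten c cs' Qh ((b':nat) :: K)))).
have hsz : size ranks = size cs' by rewrite size_map.
transitivity (\sum_(K <- mindices ranks) \sum_(K' <- mindices ranks)
   (K == K')%:R * (Qh (flat ranks K) b * Qh (flat ranks K') b')).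
  under eq_bigr => A _ do rewrite big_distrl /=.
  rewrite exchange_big /=; apply: eq_big_seq => K hK.
  under eq_bigr => A _ do rewrite big_distrr /=.
  rewrite exchange_big /=; apply: eq_big_seq => K' hK'.
  rewrite !QtenE -(kprod_delta hK hK') -hsz.
  have e : size ranks = size [seq nT x | x <- cs'] by rewrite !size_map.
  have key : \sum_(A <- mindices [seq nT x | x <- cs'])
     kprod (size ranks) (fun j => basis (nth dflt cs' j)) A K *
     kprod (size ranks) (fun j => basis (nth dflt cs' j)) A K' =
     kprod (R:=R) (size ranks) (fun j a b => (a == b)%:R) K K'.
    transitivity (\sum_(A <- mindices [seq nT x | x <- cs'])
     kprod (size ranks) (fun j => trm (basis (nth dflt cs' j))) K A *
     kprod (size ranks) (fun j => basis (nth dflt cs' j)) A K'); first by [].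
    rewrite e kprod_mul /kprod; apply: eq_bigr => j _.
    have hj : (j < size cs')%N by rewrite -hsz e.
    rewrite /mulm /trm (nth_map dflt) //.
    have hj' : (j < size ranks)%N by rewrite hsz.
    rewrite (orthocolsE (horth _ hj)) //.
      by rewrite -(nth_map dflt 0%N (fun x => rank x)) //; exact: mindices_nth.
    by rewrite -(nth_map dflt 0%N (fun x => rank x)) //; exact: mindices_nth.
  rewrite -key big_distrl /=; apply: eq_bigr => A _; rewrite /ranks; ring.
rewrite (eq_big_seq (fun K => Qh (flat ranks K) b * Qh (flat ranks K) b')); last first.
  move=> K hK; rewrite (sum_delta (fun K' => Qh (flat ranks K) b * Qh (flat ranks K') b')) //.
  exact: uniq_mindices.
rewrite (sum_flat ranks (fun k => Qh k b * Qh k b')).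
by rewrite (orthocolsE hQ).
Qed.

End P2.

Section P3.
Variable R : realType.
Variable n : nat -> nat.
Local Notation ttn := (ttn R).
Local Notation dflt := (dflt R).
Local Notation basis := (@Defs.basis R n).
Local Notation nT := (@Defs.nT R n).

Lemma mprod0E r (S : mat R) (C : tens R) b L :
  mprod 0 r (trm S) C (b :: L) = \sum_(k < r) S k b * C ((k:nat) :: L).
Proof. by []. Qed.

Lemma node_cover r (C : tens R) cs cs' c (Qh S Z : mat R) :
  size cs' = size cs ->
  [seq nT x | x <- cs'] = [seq nT x | x <- cs] ->
  (forall j a b, (j < size cs)%N -> (a < nT (nth dflt cs j))%N -> (b < rank (nth dflt cs j))%N ->
     mulm (rank (nth dflt cs' j)) (basis (nth dflt cs' j)) (Mhat n (nth dflt cs j) (nth dflt cs' j)) a b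
     = basis (nth dflt cs j) a b) ->
  (forall k b, (k < prodn [seq rank x | x <- cs'])%N -> (b < r)%N ->
     chat0 n (mprod 0 r (trm S) C) cs cs' (b :: unflat [seq rank x | x <- cs'] k)
     = \sum_(l < c) Qh k l * Z l b) ->
  forall a b, (a < prodn [seq nT x | x <- cs])%N -> (b < r)%N ->
   \sum_(k < r) basis (TNode r C cs) a k * S k b =
   \sum_(l < c) basis (TNode c (Qten c cs' Qh) cs') a l * Z l b.
Proof.
move=> hsz hnT hproj hspan a b ha hb.
set A := unflat [seq nT x | x <- cs] a.
have hA : A \in mindices [seq nT x | x <- cs] by apply: unflat_mem.
set ranks := [seq rank x | x <- cs]; set ranks' := [seq rank x | x <- cs'].
transitivity (\sum_(L <- mindices ranks)
   kprod (size cs) (fun j => basis (nth dflt cs j)) A L * \sum_(k < r) S k b * C ((k:nat) :: L)).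
  under eq_bigr => k _ do rewrite basis_node big_distrl /=.
  rewrite exchange_big /=; apply: eq_bigr => L _; rewrite big_distrr /=.
  by apply: eq_bigr => k _; rewrite -/A; ring.
symmetry.
under eq_bigr => l _ do rewrite basis_node big_distrl /=.
rewrite exchange_big /= hnT -/A.
transitivity (\sum_(K <- mindices ranks')
   kprod (size cs') (fun j => basis (nth dflt cs' j)) A K *
   chat0 n (mprod 0 r (trm S) C) cs cs' (b :: K)).
  apply: eq_big_seq => K hK.
  have [uf hf] := unflat_flat hK.
  have e := hspan (flat ranks' K) b hf hb; rewrite uf in e.
  rewrite e big_distrr /=; apply: eq_bigr => l _.
  by rewrite QtenE; ring.
have hszr : size ranks' = size cs' by rewrite size_map.
transitivity (\sum_(K <- mindices ranks') \sum_(L <- mindices ranks)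
   kprod (size cs') (fun j => basis (nth dflt cs' j)) A K *
   kprod (size cs') (fun j => Mhat n (nth dflt cs j) (nth dflt cs' j)) K L *
   \sum_(k < r) S k b * C ((k:nat) :: L)).
  apply: eq_big_seq => K hK.
  rewrite chat0E; last by rewrite (size_mindices hK) hszr hsz.
  rewrite big_distrr /=; apply: eq_bigr => L _.
  by rewrite mprod0E hsz mulrA.
rewrite exchange_big /=; apply: eq_big_seq => L hL.
rewrite -big_distrl /= -hszr kprod_mul; congr (_ * _).
rewrite /kprod hszr hsz; apply: eq_bigr => j _.
have hj : (j < size cs)%N by [].
rewrite /ranks' (nth_map dflt) ?hsz // hproj //.
  rewrite -(nth_map dflt 0%N nT) //; apply: mindices_nth => //; by rewrite size_map.
rewrite -(nth_map dflt 0%N (fun x => rank x)) //; apply: mindices_nth => //; by rewrite size_map.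
Qed.

Lemma qr_unit m k (M Q S : mat R) : \rank (mx k m M) = k ->
  mx m k (trm M) = mx m k Q *m (mx k k S)^T -> mx k k S \in unitmx.
Proof.
move=> hr hqr.
have h : (k <= \rank (mx k k S))%N.
  rewrite -{1}hr -mxrank_tr.
  have -> : (mx k m M)^T = mx m k (trm M) by apply/matrixP => i j; rewrite !mxE.
  rewrite hqr; apply: leq_trans (mxrankM_maxr _ _) _; by rewrite mxrank_tr.
by rewrite -row_free_unit /row_free eqn_leq rank_leq_row.
Qed.

Lemma rank_mode0 r ds i (C : tens R) (S : mat R) : (i < size ds)%N -> mx r r S \in unitmx ->
  \rank (mx (nth 0%N ds i) (prodn (rem_at i.+1 (r :: ds))) (matz (r :: ds) i.+1 C)) = nth 0%N ds i ->
  \rank (mx (nth 0%N ds i) (prodn (rem_at i.+1 (r :: ds)))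
     (matz (r :: ds) i.+1 (mprod 0 r (trm S) C))) = nth 0%N ds i.
Proof.
move=> hi hS hr.
set ri := nth 0%N ds i; set P := prodn (rem_at i.+1 (r :: ds)).
set A := mx ri P (matz (r :: ds) i.+1 C).
set A' := mx ri P (matz (r :: ds) i.+1 (mprod 0 r (trm S) C)).
have fA : row_free A by rewrite /row_free hr.
apply/eqP; rewrite -/(row_free A') -kermx_eq0; apply/eqP/row_matrixP => j.
rewrite row0; set v := row j (kermx A').
have hv : v *m A' = 0 by apply/sub_kermxP; exact: row_sub.
clearbody v.
have hv' : forall z (b' : 'I_P), \sum_(a < ri) v z a *
    matz (r :: ds) i.+1 (mprod 0 r (trm S) C) a b' = 0.
  move=> z b'; have := congr1 (fun M : 'M[R]_(1, P) => M z b') hv.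
  rewrite mxE [RHS]mxE => e; rewrite -[RHS]e; apply: eq_bigr => a _; by rewrite [A' _ _]mxE.
apply: (row_free_inj fA); rewrite mul0mx.
apply/matrixP => z b; rewrite [RHS]mxE mxE.
under eq_bigr => a _ do rewrite [A _ _]mxE.
set D' := rem_at i ds.
have eP : P = (r * prodn D')%N by [].
have hb : (b < P)%N by [].
have hb2 : (b < r * prodn D')%N by exact: (ltn_ord b).
set p := prodn D'.
have pp : (0 < p)%N.
  by rewrite lt0n; apply/eqP => p0; move: hb2; rewrite -/p p0 muln0.
set l0 := (b %/ p)%N; set L' := unflat D' (b %% p).
have hl0 : (l0 < r)%N by rewrite ltn_divLR.
have hL' : L' \in mindices D'.
  have := unflat_mem (ds := r :: D') hb.
  by rewrite /= mem_mindices_cons => /andP[].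
have hw' : forall k0 : 'I_r, \sum_(k < r) (\sum_(a < ri) v z a * C ((k:nat) :: ins_at i a L')) * S k k0 = 0.
  move=> k0.
  have hm : ((k0:nat) :: L') \in mindices (r :: D') by rewrite mem_mindices_cons ltn_ord hL'.
  move: hm; rewrite mindices_unflat => /mapP [b' hb' eb'].
  rewrite mem_iota add0n in hb'; case/andP: hb' => _ hb'.
  rewrite -[RHS](hv' z (Ordinal hb')).
  under [RHS]eq_bigr => a _ do rewrite /matz -[unflat _ b']/(unflat (r :: D') b') -eb' /=.
  rewrite (eq_bigr (fun k : 'I_r => \sum_(a < ri) v z a * C ((k:nat) :: ins_at i a L') * S k k0)); last by move=> k _; rewrite mulr_suml.
  rewrite exchange_big /=; apply: eq_bigr => a _.
  rewrite mprod0E big_distrr /=; apply: eq_bigr => k _; ring.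
have hw : (\row_(k < r) (\sum_(a < ri) v z a * C ((k:nat) :: ins_at i a L'))) *m mx r r S = 0.
  apply/matrixP => z' k0; rewrite !mxE -[RHS](hw' k0); apply: eq_bigr => k _; by rewrite !mxE.
have w0 : (\row_(k < r) (\sum_(a < ri) v z a * C ((k:nat) :: ins_at i a L'))) = 0 by rewrite -(mulmxK hS (\row_(k < r) (\sum_(a < ri) v z a * C ((k:nat) :: ins_at i a L')))) hw mul0mx.
have := congr1 (fun M : 'M[R]_(1, r) => M 0 (Ordinal hl0)) w0.
rewrite mxE [RHS]mxE => e; rewrite -[RHS]e; apply: eq_bigr => a _.
by [].
Qed.

End P3.

Section P4.
Variable R : realType.
Variable n : nat -> nat.
Local Notation ttn := (ttn R).
Local Notation dflt := (dflt R).
Local Notation basis := (@Defs.basis R n).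
Local Notation nT := (@Defs.nT R n).

Section TInd.
Variable P : ttn -> Prop.
Hypothesis HL : forall l r U, P (TLeaf l r U).
Hypothesis HN : forall r C cs, (forall i, (i < size cs)%N -> P (nth dflt cs i)) -> P (TNode r C cs).

Fixpoint ttn_ind2 (t : ttn) : P t :=
  match t with
  | TLeaf l r U => HL l r U
  | TNode r C cs => HN r C
     ((fix G (cs : seq ttn) : forall i, (i < size cs)%N -> P (nth dflt cs i) :=
        match cs return forall i, (i < size cs)%N -> P (nth dflt cs i) with
        | [::] => fun i H => False_rect _ (Bool.diff_false_true (etrans (esym (ltn0 i)) H))
        | c :: cs' => fun i => match i return (i < (size cs').+1)%N -> P (nth dflt (c :: cs') i) with
                     | 0 => fun _ => ttn_ind2 c
                     | i'.+1 => fun H => G cs' i' H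
                     end
        end) cs)
  end.
End TInd.

Definition cov (c xh : ttn) : Prop :=
  nT xh = nT c /\ orthocols (nT c) (rank xh) (basis xh) /\
  exists X : 'M[R]_(rank xh, rank c),
    mx (nT c) (rank c) (basis c) = mx (nT c) (rank xh) (basis xh) *m X.

Lemma cov_proj c xh : cov c xh -> forall a b, (a < nT c)%N -> (b < rank c)%N ->
  mulm (rank xh) (basis xh) (Mhat n c xh) a b = basis c a b.
Proof.
case=> _ [ho [X hX]] a b ha hb.
set W := mx (nT c) (rank xh) (basis xh).
have E : W *m (W^T *m mx (nT c) (rank c) (basis c)) = mx (nT c) (rank c) (basis c).
  by rewrite hX (mulmxA W^T) ho mul1mx.
have := congr1 (fun M : 'M[R]_(nT c, rank c) => M (Ordinal ha) (Ordinal hb)) E.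
rewrite [RHS]mxE mxE => e; rewrite -[RHS]e; apply: eq_bigr => k _.
rewrite !mxE /Mhat /mulm; congr (_ * _); apply: eq_bigr => l _; by rewrite !mxE.
Qed.

Lemma In_flatten (s : ttn) (L : seq (seq ttn)) i : (i < size L)%N ->
  List.In s (nth [::] L i) -> List.In s (flatten L).
Proof.
elim: L i => [|x L IH] [|i] //= hi hs; rewrite List.in_app_iff; [left|right] => //.
exact: IH hs.
Qed.

Lemma fullrank_sub r C cs i : fullrank_ttn (TNode r C cs) -> (i < size cs)%N ->
  fullrank_ttn (nth dflt cs i).
Proof.
move=> H hi s hs; apply: H; right.
apply: (In_flatten (i := i)); first by rewrite size_map.
by rewrite (nth_map dflt).
Qed.

Lemma fullrank_root (t : ttn) : fullrank_ttn t -> node_fullrank t.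
Proof. by move=> H; apply: H; case: t => *; left. Qed.

Definition fm a b (M : 'M[R]_(a, b)) : mat R := fun i j =>
  match insub i, insub j with Some i', Some j' => M i' j' | _, _ => 0 end.

Lemma fmE a b (M : 'M[R]_(a, b)) (i : 'I_a) (j : 'I_b) : fm M i j = M i j.
Proof. by rewrite /fm !valK. Qed.

Lemma mx_fm a b (M : 'M[R]_(a, b)) : mx a b (fm M) = M.
Proof. by apply/matrixP => i j; rewrite mxE fmE. Qed.

Lemma child_inv c : forall S F t0 t1 xh, ChildRun n c S F t0 t1 xh ->
  fullrank_ttn c -> mx (rank c) (rank c) S \in unitmx -> cov c xh.
Proof.
elim/ttn_ind2: c => [l r U0|r C cs IH] S F t0 t1 xh H hfr hS.
- inversion H; subst.
  split; first by []. split; first by [].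
  match goal with h : is_true (spans_cat _ _ _ _ _ _ _) |- _ => move: h end.
  rewrite /spans_cat => /andP[_].
  rewrite col_mx_sub => /andP[_] /submxP [D hD].
  exists D^T; by rewrite -[LHS]trmxK hD trmx_mul trmxK.
- inversion H; subst.
  match goal with h : Run _ _ _ _ _ _ _ |- _ => inversion h; subst end.
  match goal with h : NodeStep _ _ _ _ _ _ _ _ _ _ _ _ |- _ => case: h => hsz [hch hode] end.
  set ranks := [seq rank x | x <- cs].
  have hrk := fullrank_root hfr; rewrite /= in hrk.
  have hcov : forall i, (i < size cs)%N -> cov (nth dflt cs i) (nth dflt cs' i).
    move=> i hi; have [hQ [hlow [hqr hcr]]] := hch i hi.
    apply: (IH i hi _ _ _ _ _ hcr); first exact: fullrank_sub hfr hi.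
    have hri : rank (nth dflt cs i) = nth 0%N ranks i by rewrite (nth_map dflt).
    apply: (qr_unit (m := prodn (rem_at i.+1 (r :: ranks)))
                    (M := matz (r :: ranks) i.+1 (mprod 0 r (trm S) C)) (Q := Q i)); last exact: hqr.
    rewrite hri; apply: rank_mode0 => //; first by rewrite size_map.
    by have := hrk i.+1; rewrite /= size_map ltnS => ->.
  have hnT : [seq nT x | x <- cs'] = [seq nT x | x <- cs].
    apply: (eq_from_nth (x0 := 0%N)); first by rewrite !size_map hsz.
    move=> i; rewrite size_map hsz => hi.
    rewrite !(nth_map dflt) ?hsz //; by case: (hcov i hi).
  have eN : nT (TNode c (Qten c cs' Qh) cs') = nT (TNode r C cs) by rewrite !nT_node hnT.
  split; first exact: eN.
  split.
    rewrite -eN; apply: node_ortho => // j hj.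
    rewrite hsz in hj; have [e [ho _]] := hcov j hj; by rewrite e.
  match goal with h : is_true (spans_cat _ _ _ _ _ _ _) |- _ => move: h end.
  rewrite /spans_cat => /andP[_].
  rewrite col_mx_sub => /andP[_] /submxP [D hD].
  set P := prodn [seq rank x | x <- cs'].
  have hspan : forall k b, (k < P)%N -> (b < r)%N ->
     chat0 n (mprod 0 r (trm S) C) cs cs' (b :: unflat [seq rank x | x <- cs'] k)
     = \sum_(l < c) Qh k l * fm D^T l b.
    move=> k b hk hb.
    have := congr1 (fun M : 'M[R]_(r, P) => M (Ordinal hb) (Ordinal hk)) hD.
    rewrite !mxE /matz /ins_at /rem_at /trm /= !drop0 take0 => ->.
    apply: eq_bigr => l _. rewrite !mxE (fmE _ l (Ordinal hb)) mxE mulrC. by [].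
  have hcv := node_cover hsz hnT (fun j a b hj ha hb => cov_proj (hcov j hj) ha hb) hspan.
  exists (D^T *m invmx (mx r r S)).
  rewrite mulmxA -[LHS](mulmxK hS); congr (_ *m _).
  apply/matrixP => a b; rewrite !mxE.
  have ha : (a < prodn [seq nT x | x <- cs])%N by rewrite -(nT_node n r C).
  transitivity (\sum_(k < r) basis (TNode r C cs) a k * S k b); first by apply: eq_bigr => k _; rewrite !mxE.
  rewrite (hcv a b ha (ltn_ord b)); apply: eq_bigr => l _; by rewrite !mxE fmE mxE.
Qed.

End P4.

Section P5.
Local Open Scope classical_set_scope.
Variable R : realType.

Lemma cvg_bigsum (T : Type) (X : eqType) (F : set_system T) {FF : Filter F}
   (l : seq X) (f : X -> T -> R) (a : X -> R) :
  (forall x, x \in l -> f x @ F --> a x) ->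
  (fun t => \sum_(x <- l) f x t) @ F --> \sum_(x <- l) a x.
Proof.
elim: l => [|x l IH] h.
  rewrite big_nil; under eq_fun do rewrite big_nil; exact: cvg_cst.
under eq_fun do rewrite big_cons; rewrite big_cons.
apply: (cvgD (f := fun t => f x t) (g := fun t => \sum_(j <- l) f j t)).
  by apply: h; rewrite mem_head.
by apply: IH => z hz; apply: h; rewrite inE hz orbT.
Qed.

Lemma sumsq_le (l : seq (seq nat)) (f : seq nat -> R) :
  \sum_(J <- l) f J * f J <= (\sum_(J <- l) `|f J|) ^+ 2.
Proof.
elim: l => [|x l IH]; first by rewrite !big_nil expr0n.
rewrite !big_cons.
have hS : 0 <= \sum_(J <- l) `|f J| by apply: sumr_ge0 => *; exact: normr_ge0.
have hx : `|f x| ^+ 2 = f x * f x by rewrite real_normK ?num_real // expr2.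
have hx0 : 0 <= `|f x| by exact: normr_ge0.
nra.
Qed.

Lemma normT_le_sum D (H : tens R) : normT D H <= \sum_(J <- mindices D) `|H J|.
Proof.
rewrite /normT /innerT.
have hS : 0 <= \sum_(J <- mindices D) `|H J| by apply: sumr_ge0 => *; exact: normr_ge0.
apply: le_trans (ler_wsqrtr (sumsq_le _ _)) _.
by rewrite sqrtr_sqr ger0_norm.
Qed.

Lemma innerT_sub D (X Y : tens R) :
  innerT D X (subT Y (fun J => 0)) = innerT D X Y.
Proof. by apply: eq_bigr => J _; rewrite /subT subr0. Qed.


Lemma E_cvg D (E : tens R -> R) gradE (T : Type) (F : set_system T) {FF : Filter F}
  (y : T -> tens R) (y0 : tens R) :
  C1_with_gradient D E gradE ->
  (forall J, J \in mindices D -> (fun s => y s J) @ F --> y0 J) ->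
  (fun s => E (y s)) @ F --> E y0.
Proof.
move=> [_ [hdiff _]] hy.
apply/cvgrPdist_le => eps eps0.
have [del del0 hdel] := hdiff y0 1 ltr01.
set G := gradE y0.
have c1 : (fun s => \sum_(J <- mindices D) G J * (y s J - y0 J)) @ F --> 0.
  have z1 : \sum_(J <- mindices D) G J * (y0 J - y0 J) = 0.
    by rewrite big1 // => J _; rewrite subrr mulr0.
  rewrite -[X in _ --> X]z1; apply: cvg_bigsum => J hJ.
  apply: (cvgM (f := fun _ => G J) (g := fun s => y s J - y0 J)); first exact: cvg_cst.
  apply: (cvgB (f := fun s => y s J) (g := fun _ => y0 J)); [exact: hy | exact: cvg_cst].
have c2 : (fun s => \sum_(J <- mindices D) `|y s J - y0 J|) @ F --> 0.
  have z1 : \sum_(J <- mindices D) `|y0 J - y0 J| = 0.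
    by rewrite big1 // => J _; rewrite subrr normr0.
  rewrite -[X in _ --> X]z1; apply: cvg_bigsum => J hJ.
  apply: (cvg_norm (f := fun s => y s J - y0 J)).
  apply: (cvgB (f := fun s => y s J) (g := fun _ => y0 J)); [exact: hy | exact: cvg_cst].
have e2 : 0 < eps / 2 by rewrite divr_gt0.
have m0 : 0 < Num.min del (eps / 2) by rewrite lt_min del0 e2.
have n1 := (cvgrPdist_lt _ _).1 c1 _ e2.
have n2 := (cvgrPdist_lt _ _).1 c2 _ m0.
apply: (@filterS2 _ F FF _ _ _ _ (n1 FF) (n2 FF)) => s h1 h2.
rewrite sub0r normrN in h1; rewrite sub0r normrN in h2.
set H := subT (y s) y0.
have eys : y s = addT y0 H by apply: funext => J; rewrite /addT /H /subT addrC subrK.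
have hS : 0 <= \sum_(J <- mindices D) `|y s J - y0 J| by apply: sumr_ge0 => *; exact: normr_ge0.
have hSn : `|\sum_(J <- mindices D) `|y s J - y0 J| | = \sum_(J <- mindices D) `|y s J - y0 J|.
  by rewrite ger0_norm.
rewrite hSn lt_min in h2; case/andP: h2 => h2a h2b.
have hN : normT D H <= \sum_(J <- mindices D) `|y s J - y0 J| by exact: normT_le_sum.
have hd := hdel H (le_lt_trans hN h2a).
rewrite -eys mul1r in hd.
have hin : innerT D G H = \sum_(J <- mindices D) G J * (y s J - y0 J) by [].
rewrite hin in hd.
set I := \sum_(J <- mindices D) G J * (y s J - y0 J) in h1 hd.
set a := E (y s) - E y0 - I in hd.
have -> : E y0 - E (y s) = - (a + I) by rewrite /a; ring.
rewrite normrN; apply: le_trans (ler_normD _ _) _.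
have ha : `|a| <= eps / 2 by apply: le_trans hd _; apply: le_trans hN _; exact: ltW.
have hI : `|I| <= eps / 2 by exact: ltW.
by rewrite [eps](splitr eps) lerD.
Qed.

Lemma chain_derive D (E : tens R -> R) gradE (y : R -> tens R) (t : R) (dy : tens R) :
  C1_with_gradient D E gradE ->
  (forall J, J \in mindices D -> is_derive t (1:R) (fun s => y s J) (dy J)) ->
  is_derive t (1:R) (fun s => E (y s)) (innerT D (gradE (y t)) dy).
Proof.
move=> [_ [hdiff _]] hy.
set L := innerT D (gradE (y t)) dy.
pose sh (h : R) : R := (shift t) (h *: (1:R)).
pose q J (h : R) : R := h^-1 * (y (sh h) J - y t J).
have hq : forall J, J \in mindices D -> q J @ (0:R)^' --> dy J.
  move=> J hJ; have [hd hv] := hy J hJ.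
  rewrite /derivable in hd; rewrite /derive in hv; rewrite -hv; exact: hd.
suff hc : (fun h : R => h^-1 * (E (y (sh h)) - E (y t))) @ (0:R)^' --> L.
  apply: DeriveDef; first by apply/cvg_ex; exists L.
  rewrite /derive; exact: cvg_lim hc.
apply/cvgrPdist_le => eps eps0.
set G := gradE (y t).
set M := \sum_(J <- mindices D) `|dy J|.
have M0 : 0 <= M by apply: sumr_ge0 => *; exact: normr_ge0.
have M1 : 0 < M + 1 by rewrite ltr_wpDl.
have e2 : 0 < eps / 2 by rewrite divr_gt0.
set e1 := eps / 2 / (M + 1).
have e1p : 0 < e1 by rewrite divr_gt0.
have [del del0 hdel] := hdiff (y t) _ e1p.
have c1 : (fun h => \sum_(J <- mindices D) G J * q J h) @ (0:R)^' --> L.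
  apply: cvg_bigsum => J hJ.
  apply: (cvgM (f := fun _ => G J)); [exact: cvg_cst | exact: hq].
have c2 : (fun h => \sum_(J <- mindices D) `|q J h|) @ (0:R)^' --> M.
  apply: cvg_bigsum => J hJ; apply: (cvg_norm (f := q J)); exact: hq.
have c3 : (fun h => h * \sum_(J <- mindices D) `|q J h|) @ (0:R)^' --> 0.
  rewrite -[X in _ --> X](mul0r M).
  apply: (cvgM (f := fun h => h)); [exact: cvg_within | exact: c2].
near=> h.
have hn0 : h != 0 by near: h; exact: nbhs_dnbhs_neq.
have h1 : `|L - \sum_(J <- mindices D) G J * q J h| < eps / 2.
  by near: h; apply: (cvgrPdist_lt _ _).1 c1 _ e2.
have h2 : `|M - \sum_(J <- mindices D) `|q J h| | < 1.
  by near: h; apply: (cvgrPdist_lt _ _).1 c2 _ ltr01.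
have h3 : `|0 - h * \sum_(J <- mindices D) `|q J h| | < del.
  by near: h; apply: (cvgrPdist_lt _ _).1 c3 _ del0.
rewrite sub0r normrN in h3.
set H := subT (y (sh h)) (y t).
have eys : y (sh h) = addT (y t) H by apply: funext => J; rewrite /addT /H /subT addrC subrK.
have hHJ : forall J, H J = h * q J h by move=> J; rewrite /q mulVKf.
set Sq := \sum_(J <- mindices D) `|q J h|.
have Sq0 : 0 <= Sq by apply: sumr_ge0 => *; exact: normr_ge0.
have hSH : \sum_(J <- mindices D) `|H J| = `|h| * Sq.
  rewrite /Sq big_distrr /=; apply: eq_bigr => J _; by rewrite hHJ normrM.
rewrite normrM (ger0_norm Sq0) in h3.
have hN : normT D H <= `|h| * Sq by rewrite -hSH; exact: normT_le_sum.
have hd := hdel H (le_lt_trans hN h3).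
rewrite -eys in hd.
set Sg := \sum_(J <- mindices D) G J * q J h in h1.
have hin : innerT D G H = h * Sg.
  rewrite /innerT /Sg big_distrr /=; apply: eq_bigr => J _; rewrite hHJ; ring.
rewrite hin in hd.
set a := E (y (sh h)) - E (y t) - h * Sg in hd.
have -> : h^-1 * (E (y (sh h)) - E (y t)) = h^-1 * a + Sg.
  have -> : E (y (sh h)) - E (y t) = a + h * Sg by rewrite /a; ring.
  by rewrite mulrDr mulKf.
have hSq : Sq < M + 1.
  move: h2; rewrite -/Sq => h2.
  have := ler_normlW (le_refl `|M - Sq|) => _.
  have : M - Sq <= `|M - Sq| := ler_norm _.
  have : - (M - Sq) <= `|M - Sq| by rewrite -normrN ler_norm.
  move: h2; lra.
have ha : `|h^-1 * a| <= e1 * Sq.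
  rewrite normrM normfV.
  have hh : 0 < `|h| by rewrite normr_gt0.
  rewrite ler_pdivrMl //.
  apply: le_trans hd _; rewrite mulrCA; apply: ler_wpM2l; first exact: ltW.
  exact: hN.
have hfin : e1 * Sq <= eps / 2.
  apply: le_trans (ler_wpM2l (ltW e1p) (ltW hSq)) _.
  by rewrite /e1 divfK ?(gt_eqF M1).
have hL : `|L - (h^-1 * a + Sg)| <= `|L - Sg| + `|h^-1 * a|.
  have -> : L - (h^-1 * a + Sg) = (L - Sg) + - (h^-1 * a) by ring.
  by apply: le_trans (ler_normD _ _) _; rewrite normrN.
apply: le_trans hL _.
have h1' : `|L - Sg| <= eps / 2 by exact: ltW.
rewrite [eps](splitr eps); apply: lerD => //; exact: le_trans ha hfin.
Unshelve. all: by end_near.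
Qed.

End P5.

Section P6.
Local Open Scope classical_set_scope.
Variable R : realType.
Variable n : nat -> nat.
Local Notation ttn := (ttn R).
Local Notation dflt := (dflt R).
Local Notation basis := (@Defs.basis R n).
Local Notation nT := (@Defs.nT R n).

Lemma mprods_opp i Bs (A : tens R) :
  mprods_from i Bs (fun J => - A J) = fun J => - mprods_from i Bs A J.
Proof.
elim: Bs i A => [|[B d] Bs IH] i A //=.
have -> : mprod i d B (fun J => - A J) = fun J => - mprod i d B A J.
  apply: funext => J; rewrite /mprod -sumrN; apply: eq_bigr => k _; by rewrite mulrN.
exact: IH.
Qed.

Lemma mindices1 ds J : J \in mindices (1 :: ds) ->
  exists2 A, J = 0%N :: A & A \in mindices ds.
Proof.
move=> hJ; have [j [A eJ]] := mindices_cons_inv hJ; subst J.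
rewrite mem_mindices_cons ltnS leqn0 in hJ; case/andP: hJ => /eqP -> hA.
by exists A.
Qed.

Lemma sum_mindices1 ds (f : seq nat -> R) :
  \sum_(J <- mindices (1 :: ds)) f J = \sum_(A <- mindices ds) f (0%N :: A).
Proof. by rewrite big_allpairs_dep /= big_cons big_nil addr0. Qed.

Lemma adjointE Xhs (Z C : tens R) :
  innerT (1 :: [seq nT x | x <- Xhs]) Z (Defs.expand n Xhs C) =
  innerT (1 :: [seq rank x | x <- Xhs]) (project n Xhs Z) C.
Proof.
rewrite /innerT !sum_mindices1.
transitivity (\sum_(A <- mindices [seq nT x | x <- Xhs]) \sum_(K <- mindices [seq rank x | x <- Xhs])
   Z (0%N :: A) * (kprod (size Xhs) (fun j => basis (nth dflt Xhs j)) A K * C (0%N :: K))).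
  apply: eq_big_seq => A hA; rewrite expandE ?big_distrr //.
  by rewrite (size_mindices hA) size_map.
rewrite exchange_big /=; apply: eq_big_seq => K hK.
rewrite projectE; last by rewrite (size_mindices hK) size_map.
rewrite big_distrl /=; apply: eq_bigr => A _.
rewrite /kprod; ring.
Qed.

Lemma innerT_ge0 D (X : tens R) : 0 <= innerT D X X.
Proof. by apply: sumr_ge0 => J _; rewrite -expr2 sqr_ge0. Qed.

Lemma normT_sq D (X : tens R) : normT D X ^+ 2 = innerT D X X.
Proof. by rewrite /normT sqr_sqrtr // innerT_ge0. Qed.

Lemma is_derive_bigsum (X : eqType) (l : seq X) (f : X -> R -> R) (df : X -> R) (t : R) :
  (forall x, x \in l -> is_derive t (1:R) (f x) (df x)) ->
  is_derive t (1:R) (fun s => \sum_(x <- l) f x s) (\sum_(x <- l) df x).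
Proof.
elim: l => [|x l IH] h.
  rewrite big_nil.
  have -> : (fun s => \sum_(x <- [::]) f x s) = cst 0 by apply: funext => s; rewrite big_nil.
  exact: is_derive_cst.
rewrite big_cons.
have -> : (fun s => \sum_(y <- x :: l) f y s) = f x + (fun s => \sum_(y <- l) f y s).
  by apply: funext => s; rewrite big_cons.
apply: is_deriveD; first by apply: h; rewrite mem_head.
by apply: IH => z hz; apply: h; rewrite inE hz orbT.
Qed.

Lemma is_derive_scal (k : R) (f : R -> R) (df t : R) :
  is_derive t (1:R) f df -> is_derive t (1:R) (fun s => k * f s) (k * df).
Proof.
move=> hf.
have -> : (fun s => k * f s) = k *: f by apply: funext.
exact: is_deriveZ.
Qed.

Lemma init_eq C0 cs Xhs A : size Xhs = size cs ->
  (forall j, (j < size cs)%N -> cov n (nth dflt cs j) (nth dflt Xhs j)) ->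
  A \in mindices [seq nT c | c <- cs] ->
  Defs.expand n Xhs (chat0 n C0 cs Xhs) (0%N :: A) = Defs.expand n cs C0 (0%N :: A).
Proof.
move=> hsz hcov hA.
have sA : size A = size cs by rewrite (size_mindices hA) size_map.
rewrite expandE ?hsz // expandE //.
set ranksX := [seq rank x | x <- Xhs]; set ranks := [seq rank c | c <- cs].
transitivity (\sum_(K <- mindices ranksX) \sum_(L <- mindices ranks)
   kprod (size Xhs) (fun j => basis (nth dflt Xhs j)) A K *
   kprod (size cs) (fun j => Mhat n (nth dflt cs j) (nth dflt Xhs j)) K L * C0 (0%N :: L)).
  apply: eq_big_seq => K hK; rewrite chat0E; last by rewrite (size_mindices hK) size_map hsz.
  rewrite big_distrr /=; apply: eq_bigr => L _. by rewrite mulrA hsz.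
rewrite exchange_big /=; apply: eq_big_seq => L hL.
have hszX : size ranksX = size cs by rewrite size_map hsz.
rewrite -big_distrl /= hsz -hszX kprod_mul hszX; congr (_ * _).
rewrite /kprod; apply: eq_bigr => j _.
have hj : (j < size cs)%N by [].
rewrite /ranksX (nth_map dflt) ?hsz // (cov_proj (hcov j hj)) //.
  rewrite -(nth_map dflt 0%N nT) //; apply: mindices_nth => //; by rewrite size_map.
rewrite -(nth_map dflt 0%N (fun x => rank x)) //; apply: mindices_nth => //; by rewrite size_map.
Qed.

End P6.

Unset Implicit Arguments.

Theorem theorem6p4 (R : realType) (n : nat -> nat) (d : nat)
  (C0 : tens R) (cs : seq (ttn R))
  (E : tens R -> R) (gradE : tens R -> tens R) (t0 t1 : R)
  (Q S : nat -> mat R) (Xhs : seq (ttn R)) (Chat : R -> tens R) :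
  let Y0 := TNode 1%N C0 cs in
  wf_tree Y0 ->
  perm_eq (leaves Y0) (iota 1 d) ->
  ortho_ttn n Y0 ->
  fullrank_ttn Y0 ->
  C1_with_gradient (1%N :: [seq nT n c | c <- cs]) E gradE ->
  t0 < t1 ->
  NodeStep n (ChildRun n) 1%N C0 cs (fun t Y J => - gradE Y J) t0 t1 Q S Xhs Chat ->
  let h := t1 - t0 in
  let Yhat := fun t => xt n (TNode 1%N (Chat t) Xhs) in
  let g := fun mu => normT (1%N :: [seq rank x | x <- Xhs])
                           (project n Xhs (gradE (Yhat (t0 + mu * h)))) in
  forall alpha : R,
    (exists2 mu : R, 0 <= mu <= 1 & alpha = g mu) ->
    (forall mu : R, 0 <= mu <= 1 -> alpha <= g mu) ->
    E (Yhat t1) <= E (xt n Y0) - alpha ^+ 2 * h.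
Proof.
move=> Y0 hwf hperm hortho hfr hC1 ht NS h Yhat g alpha [mu0 hmu0 ha] hmin.
case: NS => hsz [hch hode].
set ranks := [seq rank c | c <- cs].
have hrk := fullrank_root hfr; rewrite /= in hrk.
have hcov : forall i, (i < size cs)%N -> cov n (nth (dflt R) cs i) (nth (dflt R) Xhs i).
  move=> i hi; have [hQ [hlow [hqr hcr]]] := hch i hi.
  apply: (child_inv hcr); first exact: fullrank_sub hfr hi.
  have hri : rank (nth (dflt R) cs i) = nth 0%N ranks i by rewrite (nth_map (dflt R)).
  apply: (qr_unit (m := prodn (rem_at i.+1 (1%N :: ranks))) (M := matz (1%N :: ranks) i.+1 C0)
                  (Q := Q i)); last exact: hqr.
  rewrite hri; apply: (hrk i.+1); by rewrite /= size_map ltnS.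
have hnT : [seq nT n x | x <- Xhs] = [seq nT n c | c <- cs].
  apply: (eq_from_nth (x0 := 0%N)); first by rewrite !size_map hsz.
  move=> i; rewrite size_map hsz => hi.
  rewrite !(nth_map (dflt R)) ?hsz //; by case: (hcov i hi).
set Dy := 1%N :: [seq nT n c | c <- cs].
set Dr := 1%N :: [seq rank x | x <- Xhs].
pose Fc t := project n Xhs (fun J => - gradE (Yhat t) J).
pose dY t := Defs.expand n Xhs (Fc t).
have yE : forall s A, A \in mindices [seq nT n c | c <- cs] ->
    Yhat s (0%N :: A) = \sum_(K <- mindices [seq rank x | x <- Xhs])
      kprod (size Xhs) (fun j => Defs.basis n (nth (dflt R) Xhs j)) A K * Chat s (0%N :: K).
  move=> s A hA.
  transitivity (Defs.expand n Xhs (Chat s) (0%N :: A)); first by [].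
  by rewrite expandE // (size_mindices hA) size_map hsz.
have hK0 : forall K, K \in mindices [seq rank x | x <- Xhs] -> (0%N :: K) \in mindices Dr.
  by move=> K hK; rewrite mem_mindices_cons hK.
have hE0 : E (Yhat t0) = E (xt n Y0).
  case: hC1 => hext _; apply: hext => J hJ.
  have [A -> hA] := mindices1 hJ.
  rewrite yE //.
  change (xt n Y0 (0%N :: A)) with (Defs.expand n cs C0 (0%N :: A)).
  rewrite -(init_eq C0 hsz hcov hA) expandE; last by rewrite (size_mindices hA) size_map hsz.
  apply: eq_big_seq => K hK; congr (_ * _).
  by have [-> _] := hode _ (hK0 K hK).
have hder : forall x, x \in `]t0, t1[ ->
    is_derive x (1:R) (fun s => E (Yhat s)) (innerT Dy (gradE (Yhat x)) (dY x)).
  move=> x; rewrite in_itv /= => /andP[hx0 hx1].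
  apply: chain_derive => // J hJ.
  have [A -> hA] := mindices1 hJ.
  have -> : (fun s => Yhat s (0%N :: A)) = (fun s => \sum_(K <- mindices [seq rank x | x <- Xhs])
      kprod (size Xhs) (fun j => Defs.basis n (nth (dflt R) Xhs j)) A K * Chat s (0%N :: K)).
    by apply: funext => s; rewrite yE.
  have -> : dY x (0%N :: A) = \sum_(K <- mindices [seq rank x | x <- Xhs])
      kprod (size Xhs) (fun j => Defs.basis n (nth (dflt R) Xhs j)) A K * Fc x (0%N :: K).
    by rewrite /dY expandE // (size_mindices hA) size_map hsz.
  apply: is_derive_bigsum => K hK; apply: is_derive_scal.
  have [_ [_ hd]] := hode _ (hK0 K hK).
  by apply: hd; rewrite hx0 hx1.
have hval : forall x, innerT Dy (gradE (Yhat x)) (dY x) =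
    - (normT Dr (project n Xhs (gradE (Yhat x)))) ^+ 2.
  move=> x; rewrite /Dy -hnT /dY adjointE /Fc normT_sq.
  have -> : project n Xhs (fun J => - gradE (Yhat x) J) = fun J => - project n Xhs (gradE (Yhat x)) J.
    by rewrite /project mprods_opp.
  rewrite /innerT -sumrN; apply: eq_bigr => J _; by rewrite mulrN.
have hcont : {within `[t0, t1], continuous (fun s => E (Yhat s))}%classic.
  move=> x; apply: (E_cvg hC1) => J hJ.
  have [A -> hA] := mindices1 hJ.
  have -> : (fun s => Yhat s (0%N :: A)) = (fun s => \sum_(K <- mindices [seq rank x | x <- Xhs])
      kprod (size Xhs) (fun j => Defs.basis n (nth (dflt R) Xhs j)) A K * Chat s (0%N :: K)).
    by apply: funext => s; rewrite yE.
  rewrite yE //; apply: cvg_bigsum => K hK.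
  apply: cvgM; first exact: cvg_cst.
  have [_ [hc _]] := hode _ (hK0 K hK).
  exact: hc x.
have [c hc hmvt] := MVT ht hder hcont.
rewrite hval hE0 in hmvt.
move: hc; rewrite in_itv /= => /andP[hc0 hc1].
have hpos : 0 < h by rewrite /h subr_gt0.
set mu := (c - t0) / h.
have ec : t0 + mu * h = c by rewrite /mu divfK ?(gt_eqF hpos) // addrC subrK.
have hmu : 0 <= mu <= 1.
  apply/andP; split; first by rewrite /mu divr_ge0 // subr_ge0 ltW.
  by rewrite /mu ler_pdivrMr // mul1r /h; lra.
have hal := hmin mu hmu.
rewrite /g ec -/Dr in hal.
have hal0 : 0 <= alpha by rewrite ha /g; exact: sqrtr_ge0.
set N := normT Dr (project n Xhs (gradE (Yhat c))) in hmvt hal.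
have : alpha ^+ 2 <= N ^+ 2 by rewrite lerXn2r // ?nnegrE // (le_trans hal0 hal).
move: hmvt; rewrite -/h => hmvt hsq.
have -> : E (Yhat t1) = E (xt n Y0) - N ^+ 2 * h by rewrite -[LHS](subrK (E (xt n Y0))) hmvt; ring.
by rewrite lerD2l lerN2 ler_wpM2r // ltW.
Qed.
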